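(* Let $a_n=a_n(123,\{1\},\{1,3\})$. Then $a_1=1$, $a_2=2$, and for $n>2$, $a_n=(n-1)a_{n-1}+(n-2)a_{n-2}$. Moreover, for all $n\ge1$, \[a_n=(n-1)!+\sum_{k=0}^{n-2}(-1)^{n-k}(k+1)!\binom{n-1}{k}=\frac{c_{n+1}}{n}=c_n+c_{n-1},\] where $c_m$ is the number of non-derangements of $[m]$ (permutations of $[m]$ with at least one fixed point), $c_m=m!\big(1-\sum_{k=0}^{m}\frac{(-1)^k}{k!}\big)$, with $c_0=0$.
   Context: For $n\ge1$, $\mathcal S_n$ is the set of permutations $\pi=\pi_1\cdots\pi_n$ of $[n]$. A bi-vincular pattern of length $k$ is a triple $p=(\sigma,X,Y)$ with $\sigma\in\mathcal S_k$ and $X,Y\subseteq\{0,1,\dots,k\}$. A permutation $\pi\in\mathcal S_n$ contains $p$ if there are indices $1\le i_1<\dots<i_k\le n$ such that $(\pi_{i_1},\dots,\pi_{i_k})$ is order-isomorphic to $\sigma$ and, letting $j_1<\dots<j_k$ be the values $\pi_{i_1},\dots,\pi_{i_k}$ sorted increasingly and setting $i_0=j_0=0$, $i_{k+1}=j_{k+1}=n+1$, one has $i_{x+1}=i_x+1$ for all $x\in X$ and $j_{y+1}=j_y+1$ for all $y\in Y$. Otherwise $\pi$ avoids $p$; $a_n(p)$ is the number of $\pi\in\mathcal S_n$ avoiding $p$. *)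

(* Defs.v *)
From mathcomp Require Import all_boot all_order all_algebra all_fingroup.
Set Implicit Arguments. Unset Strict Implicit. Unset Printing Implicit Defensive.

(* Permutations of [n] are elements of 'S_n (permutations of 'I_n = {0..n-1});
   the ordinal i stands for the integer i+1 of [n], both for positions and values. *)

Section BiVincular.
Variables (n k : nat) (sigma : 'S_k) (X Y : {set 'I_k.+1}).

(* idx : 'I_k -> 'I_n encodes the indices i_1 < ... < i_k (0-based). *)
Definition occurrence (pi : 'S_n) (idx : {ffun 'I_k -> 'I_n}) : bool :=
  let ipos := 0 :: [seq (idx a).+1 | a <- enum 'I_k] in
  let jpos := 0 :: sort leq [seq (pi (idx a)).+1 | a <- enum 'I_k] in
  (* i_0 = j_0 = 0 and i_{k+1} = j_{k+1} = n+1 via the default of nth *)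
  let i x := nth n.+1 ipos x in
  let j x := nth n.+1 jpos x in
  [&& [forall a : 'I_k, forall b : 'I_k, (a < b) ==> (idx a < idx b)],
      [forall a : 'I_k, forall b : 'I_k,
          (pi (idx a) < pi (idx b)) == (sigma a < sigma b)],
      [forall x in X, i (val x).+1 == (i (val x)).+1] &
      [forall y in Y, j (val y).+1 == (j (val y)).+1]].

Definition contains_bv (pi : 'S_n) : bool :=
  [exists idx : {ffun 'I_k -> 'I_n}, occurrence pi idx].

End BiVincular.

Definition avoid_count (k : nat) (sigma : 'S_k) (X Y : {set 'I_k.+1}) (n : nat) : nat :=
  #|[set pi : 'S_n | ~~ contains_bv sigma X Y pi]|.

Definition sigma123 : 'S_3 := 1%g.
Definition X1 : {set 'I_4} := [set inord 1].
Definition Y13 : {set 'I_4} := [set inord 1; inord 3].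

Definition a_seq (n : nat) : nat := avoid_count sigma123 X1 Y13 n.

Definition nonderangements (m : nat) : nat :=
  #|[set s : 'S_m | [exists i : 'I_m, s i == i]]|.

(* Main.v *)
Require Import Defs.
From mathcomp Require Import all_boot all_order all_algebra all_fingroup.
From mathcomp Require Import zify ring.
Set Implicit Arguments. Unset Strict Implicit. Unset Printing Implicit Defensive.

Definition isperm m (s : seq nat) := [&& uniq s, size s == m & all (fun x => x < m) s].
Definition perms m := permutations (iota 0 m).

Lemma mem_perms m s : (s \in perms m) = isperm m s.
Proof.
rewrite /perms mem_permutations /isperm.
apply/idP/idP.
  move=> H; rewrite (perm_uniq H) iota_uniq (perm_size H) size_iota eqxx /=.
  by apply/allP => x; rewrite (perm_mem H) mem_iota.
case/and3P=> Hu /eqP Hs /allP Ha.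
apply: uniq_perm => //; first exact: iota_uniq.
have [] := uniq_min_size Hu (s2 := iota 0 m).
- by move=> x /Ha; rewrite mem_iota.
- by rewrite size_iota Hs.
by [].
Qed.

Lemma size_perms m : size (perms m) = m`!.
Proof. by rewrite /perms size_permutations ?iota_uniq // size_iota. Qed.

Definition dec y z := if y < z then z.-1 else z.
Definition inc y z := if y <= z then z.+1 else z.
Definition del p s := map (dec (nth 0 s p)) (take p s ++ drop p.+1 s).
Definition ins p v y := take p (map (inc y) v) ++ y :: drop p (map (inc y) v).

Lemma decK y : cancel (inc y) (dec y).
Proof. move=> z; rewrite /inc /dec; do 2 case: ifPn; lia. Qed.

Lemma incK y z : z != y -> inc y (dec y z) = z.
Proof. rewrite /inc /dec; do 2 case: ifPn; lia. Qed.

Lemma split_s p s : p < size s -> s = take p s ++ nth 0 s p :: drop p.+1 s.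
Proof. by move=> H; rewrite -drop_nth // cat_take_drop. Qed.

Lemma ins_perm_eq p v y : perm_eq (ins p v y) (y :: map (inc y) v).
Proof.
rewrite /ins -cat1s perm_catCA /= cat_take_drop; exact: perm_refl.
Qed.

Lemma del_perm m s p : isperm m.+1 s -> p <= m -> isperm m (del p s).
Proof.
case/and3P=> Hu /eqP Hs /allP Ha Hp.
have Hps : p < size s by rewrite Hs.
set y := nth 0 s p.
have Es := split_s Hps.
have Hm : forall z, z \in take p s ++ drop p.+1 s -> z \in s.
  by move=> z; rewrite [X in _ -> _ \in X]Es !mem_cat inE => /orP[]->; rewrite ?orbT.
have Hu2 : uniq (y :: (take p s ++ drop p.+1 s)).
  have Hpe : perm_eq s (y :: (take p s ++ drop p.+1 s)).
    by rewrite {1}Es -cat1s perm_catCA /= perm_refl.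
  by rewrite -(perm_uniq Hpe).
case/andP: Hu2 => Hy Hu2.
have Hne : forall z, z \in take p s ++ drop p.+1 s -> z != y.
  by move=> z Hz; apply/eqP=> E; rewrite -E Hz in Hy.
have Hyl : y < m.+1 by apply: Ha; rewrite mem_nth.
apply/and3P; split.
- rewrite /del map_inj_in_uniq // => a b Ha' Hb' E.
  move: (Hne _ Ha') (Hne _ Hb') (Ha _ (Hm _ Ha')) (Ha _ (Hm _ Hb')) E.
  rewrite /dec; do 2 case: ifPn; lia.
- rewrite /del size_map size_cat size_take size_drop Hps; apply/eqP.
  move: Hs Hp; lia.
- apply/allP => z; rewrite /del => /mapP[w Hw ->].
  move: (Hne _ Hw) (Ha _ (Hm _ Hw)) Hyl; rewrite /dec; case: ifPn; lia.
Qed.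

Lemma ins_perm m v p y : isperm m v -> y <= m -> isperm m.+1 (ins p v y).
Proof.
case/and3P=> Hu /eqP Hs /allP Ha Hy.
have Hpe := ins_perm_eq p v y.
apply/and3P; split.
- rewrite (perm_uniq Hpe) /= map_inj_uniq ?Hu ?andbT.
    apply/mapP => -[z _]; rewrite /inc; case: ifPn; lia.
  by move=> a b; rewrite /inc; do 2 case: ifPn; lia.
- by rewrite (perm_size Hpe) /= size_map Hs.
- apply/allP => z; rewrite (perm_mem Hpe) inE => /orP[/eqP->|/mapP[w /Ha Hw ->]].
    by rewrite ltnS.
  by move: Hw; rewrite /inc; case: ifPn; lia.
Qed.

Lemma ins_del m s p : isperm m.+1 s -> p <= m -> ins p (del p s) (nth 0 s p) = s.
Proof.
case/and3P=> Hu /eqP Hs _ Hp.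
have Hps : p < size s by rewrite Hs.
set y := nth 0 s p.
have Es := split_s Hps.
have Hu2 : uniq (y :: (take p s ++ drop p.+1 s)).
  have Hpe : perm_eq s (y :: (take p s ++ drop p.+1 s)).
    by rewrite {1}Es -cat1s perm_catCA /= perm_refl.
  by rewrite -(perm_uniq Hpe).
case/andP: Hu2 => Hy _.
rewrite /ins /del -map_comp.
have -> : map (inc y \o dec y) (take p s ++ drop p.+1 s) = take p s ++ drop p.+1 s.
  rewrite -[RHS]map_id; apply/eq_in_map.
  by move=> z Hz /=; apply: incK; apply/eqP=> E; rewrite -E Hz in Hy.
rewrite take_size_cat ?drop_size_cat ?size_take ?Hps //.
Qed.

Lemma size_ins p v y : size (ins p v y) = (size v).+1.
Proof. by rewrite (perm_size (ins_perm_eq p v y)) /= size_map. Qed.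

Lemma nth_ins_p p v y : p <= size v -> nth 0 (ins p v y) p = y.
Proof.
move=> H; rewrite /ins nth_cat size_take size_map.
have -> : (if p < size v then p else size v) = p by case: ifPn; lia.
by rewrite ltnn subnn.
Qed.

Lemma nth_ins i p v y : i < p -> p <= size v -> nth 0 (ins p v y) i = inc y (nth 0 v i).
Proof.
move=> Hi Hp; rewrite /ins nth_cat size_take size_map.
have -> : (if p < size v then p else size v) = p by case: ltnP; lia.
rewrite Hi nth_take // (nth_map 0) //; lia.
Qed.

Lemma del_ins p v y : p <= size v -> del p (ins p v y) = v.
Proof.
move=> Hp; rewrite /del nth_ins_p //.
have Hs : size (take p (map (inc y) v)) = p by rewrite size_take size_map; case: ltnP; lia.
rewrite /ins take_size_cat // -cat_rcons drop_size_cat ?size_rcons ?Hs //.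
by rewrite cat_take_drop -map_comp (eq_map (decK y)) map_id.
Qed.

Lemma nth_del i p s : i < p -> p < size s -> nth 0 (del p s) i = dec (nth 0 s p) (nth 0 s i).
Proof.
move=> Hi Hp; rewrite /del (nth_map 0); last by rewrite size_cat size_take size_drop Hp; lia.
by rewrite nth_cat size_take Hp Hi nth_take.
Qed.

Lemma count_bij m p (P Q : pred (seq nat)) (y : seq nat -> nat) :
  p <= m ->
  (forall s, isperm m.+1 s -> P s -> Q (del p s) /\ nth 0 s p = y (del p s)) ->
  (forall v, isperm m v -> Q v -> y v <= m /\ P (ins p v (y v))) ->
  count P (perms m.+1) = count Q (perms m).
Proof.
move=> Hp HA HB.
rewrite -!size_filter.
rewrite -(size_map (del p)).
apply: perm_size.
apply: uniq_perm.
- rewrite map_inj_in_uniq ?filter_uniq ?permutations_uniq //.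
  move=> s s'; rewrite !mem_filter !mem_perms => /andP[Ps Hs] /andP[Ps' Hs'] E.
  rewrite -(ins_del Hs Hp) -(ins_del Hs' Hp).
  by rewrite (HA _ Hs Ps).2 (HA _ Hs' Ps').2 E.
- exact/filter_uniq/permutations_uniq.
move=> t; apply/idP/idP.
  case/mapP=> s; rewrite mem_filter mem_perms => /andP[Ps Hs] ->.
  by rewrite mem_filter mem_perms (HA _ Hs Ps).1 (del_perm Hs Hp).
rewrite mem_filter mem_perms => /andP[Qt Ht].
have [Hy Ps] := HB _ Ht Qt.
apply/mapP; exists (ins p t (y t)).
  by rewrite mem_filter mem_perms Ps (ins_perm _ Ht Hy).
rewrite del_ins //; case/and3P: Ht => _ /eqP -> _ //.
Qed.

Lemma count_split (T : Type) (a b : pred T) l :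
  count a l = count (fun x => a x && b x) l + count (fun x => a x && ~~ b x) l.
Proof.
elim: l => //= x l ->; case: (a x); case: (b x) => /=; lia.
Qed.

Lemma count_sum (T : Type) (a : pred T) (f : T -> nat) N l :
  all (fun x => f x < N) l ->
  count a l = \sum_(p < N) count (fun x => a x && (f x == p)) l.
Proof.
elim: l => [|x l IH] /=; first by rewrite big1.
case/andP=> Hx /IH ->; rewrite big_split /=; congr (_ + _).
case: (a x) => /=; last by rewrite big1.
rewrite (bigD1 (Ordinal Hx)) //= eqxx big1 // => i Hi.
by case: eqP => // E; move: Hi; rewrite -val_eqE /= E eqxx.
Qed.

Lemma dec_succ y a b : a != y -> b != y -> a.+1 != y ->
  (dec y b != (dec y a).+1) = (b != a.+1).
Proof. rewrite /dec; do 2 case: ifPn; lia. Qed.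
Lemma inc_succ y a b : a.+1 != y -> (inc y b != (inc y a).+1) = (b != a.+1).
Proof. rewrite /inc; do 2 case: ifPn; lia. Qed.
Lemma dec_fix p z i : i < p -> z != p -> (dec p z != i) = (z != i).
Proof. rewrite /dec; case: ifPn; lia. Qed.
Lemma inc_fix p z i : i < p -> (inc p z != i) = (z != i).
Proof. rewrite /inc; case: ifPn; lia. Qed.

Definition sf p (s : seq nat) := all (fun i => nth 0 s i.+1 != (nth 0 s i).+1) (iota 0 p.-1).
Definition nfp p (s : seq nat) := all (fun i => nth 0 s i != i) (iota 0 p).
Definition avoidL (s : seq nat) := sf (index (size s).-1 s) s.
Definition Ecount m p := count (nfp p) (perms m).
Definition Fcount m p := count (sf p) (perms m).

Lemma nfpS p s : nfp p.+1 s = nfp p s && (nth 0 s p != p).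
Proof. by rewrite /nfp -addn1 iotaD all_cat /= andbT. Qed.

Lemma sfS p s : 0 < p -> sf p.+1 s = sf p s && (nth 0 s p != (nth 0 s p.-1).+1).
Proof.
move=> Hp; rewrite /sf /= -{1}(prednK Hp) -addn1 iotaD all_cat /= andbT.
by rewrite prednK.
Qed.

Lemma isperm_nth m s i : isperm m s -> i < m -> nth 0 s i < m.
Proof.
case/and3P=> _ /eqP Hs /allP Ha Hi; apply: Ha; rewrite mem_nth // Hs //.
Qed.

Lemma isperm_neq m s i j : isperm m s -> i < m -> j < m -> i != j -> nth 0 s i != nth 0 s j.
Proof.
case/and3P=> Hu /eqP Hs _ Hi Hj; rewrite nth_uniq ?Hs //.
Qed.

Lemma isperm_mem m s x : isperm m s -> x < m -> x \in s.
Proof.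
rewrite -mem_perms /perms mem_permutations => H Hx.
by rewrite (perm_mem H) mem_iota.
Qed.

Lemma count_perms_all m (P : pred (seq nat)) :
  (forall s, isperm m s -> P s) -> count P (perms m) = m`!.
Proof.
move=> H; rewrite -size_perms; apply/eqP; rewrite -all_count.
by apply/allP => s; rewrite mem_perms; apply: H.
Qed.

Lemma E0 m : Ecount m 0 = m`!.
Proof. by apply: count_perms_all. Qed.

Lemma F0 m : Fcount m 0 = m`!.
Proof. by apply: count_perms_all. Qed.

Lemma F1 m : Fcount m 1 = m`!.
Proof. by apply: count_perms_all. Qed.

Lemma Erec m p : p <= m -> Ecount m.+1 p = Ecount m.+1 p.+1 + Ecount m p.
Proof.
move=> Hp; rewrite /Ecount (count_split _ (fun s => nth 0 s p != p)).
rewrite -(eq_count (nfpS p)); congr (_ + _).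
apply: (@count_bij m p _ _ ( fun _ => p)) => //.
- move=> s Hs /andP[Hn]; rewrite negbK => /eqP Hsp; split => //.
  apply/allP => i; rewrite mem_iota /= => Hi.
  have Hsz : p < size s by case/and3P: Hs => _ /eqP ->.
  rewrite nth_del // Hsp dec_fix //.
    by move/allP: Hn; apply; rewrite mem_iota.
  by rewrite -[X in _ != X]Hsp; apply: (isperm_neq Hs) => //; lia.
- move=> v Hv Hn; split => //.
  have Hsz : p <= size v by case/and3P: Hv => _ /eqP ->.
  rewrite nth_ins_p // eqxx negbK andbT.
  apply/allP => i; rewrite mem_iota /= => Hi.
  rewrite nth_ins // inc_fix //.
  by move/allP: Hn; apply; rewrite mem_iota.
Qed.

Lemma Frec m p : 0 < p -> p <= m -> Fcount m.+1 p = Fcount m.+1 p.+1 + Fcount m p.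
Proof.
move=> H0 Hp.
rewrite /Fcount (count_split _ (fun s => nth 0 s p != (nth 0 s p.-1).+1)).
rewrite -(eq_count (fun s => sfS s H0)); congr (_ + _).
apply: (@count_bij m p _ _ ( fun v => (nth 0 v p.-1).+1)) => //.
- move=> s Hs /andP[Hn]; rewrite negbK => /eqP Hsp.
  have Hsz : p < size s by case/and3P: Hs => _ /eqP ->.
  have Hlt : p.-1 < p by lia.
  rewrite nth_del // Hsp; split; last by rewrite /dec; case: ifPn; lia.
  apply/allP => i; rewrite mem_iota /= => Hi.
  rewrite !nth_del //; try lia.
  rewrite Hsp dec_succ.
  + by move/allP: Hn; apply; rewrite mem_iota.
  + rewrite -Hsp; apply: (isperm_neq Hs); lia.
  + rewrite -Hsp; apply: (isperm_neq Hs); lia.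
  + rewrite eqSS; apply: (isperm_neq Hs); lia.
- move=> v Hv Hn.
  have Hsz : p <= size v by case/and3P: Hv => _ /eqP ->.
  split; first by have := isperm_nth Hv (i := p.-1); lia.
  rewrite nth_ins_p // nth_ins //; last lia.
  rewrite /inc ltnn eqxx andbT.
  apply/allP => i; rewrite mem_iota /= => Hi.
  rewrite !nth_ins //; try lia.
  rewrite inc_succ.
    by move/allP: Hn; apply; rewrite mem_iota.
  rewrite eqSS; apply: (isperm_neq Hv); lia.
Qed.

Lemma avoid_count_sum n :
  count avoidL (perms n.+1) = \sum_(p < n.+1) Fcount n p.
Proof.
rewrite (@count_sum _ _ (index n) n.+1); last first.
  apply/allP => s; rewrite mem_perms => Hs.
  have := isperm_mem Hs (ltnSn n); rewrite -index_mem.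
  by case/and3P: Hs => _ /eqP ->.
apply: eq_bigr => -[p Hp] _ /=.
rewrite /Fcount; apply: (@count_bij n p _ _ (fun _ => n)) => //.
- move=> s Hs /andP[Ha /eqP Hi].
  have Hn := isperm_mem Hs (ltnSn n).
  have Hsz : size s = n.+1 by case/and3P: Hs => _ /eqP ->.
  have Hps : p < size s by rewrite -Hi index_mem.
  split; last by rewrite -Hi nth_index.
  move: Ha; rewrite /avoidL Hsz /= Hi.
  suff -> : sf p (del p s) = sf p s by [].
  apply: eq_in_all => i; rewrite mem_iota /= => Hi'.
  rewrite !nth_del //; try lia.
  have Hsp : nth 0 s p = n by rewrite -Hi nth_index.
  rewrite Hsp /dec.
  have : nth 0 s i < n.+1 by apply: (isperm_nth Hs); lia.
  have : nth 0 s i.+1 < n.+1 by apply: (isperm_nth Hs); lia.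
  do 2 case: ifPn; lia.
- move=> v Hv Hsf; split => //.
  have Hsz : size v = n by case/and3P: Hv => _ /eqP ->.
  have Hw : map (inc n) v = v.
    rewrite -[RHS]map_id; apply/eq_in_map => z Hz /=.
    case/and3P: Hv => _ _ /allP /(_ _ Hz); rewrite /inc; case: ifPn; lia.
  have Hidx : index n (ins p v n) = p.
    rewrite /ins Hw index_cat.
    have -> : (n \in take p v) = false.
      apply/negbTE/negP => /mem_take Hm.
      by case/and3P: Hv => _ _ /allP /(_ _ Hm); rewrite ltnn.
    by rewrite size_take /= eqxx addn0 Hsz; case: ifPn; lia.
  rewrite /avoidL size_ins Hsz /= Hidx eqxx andbT.
  move: Hsf; suff -> : sf p (ins p v n) = sf p v by [].
  apply: eq_in_all => i; rewrite mem_iota /= => Hi'.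
  rewrite !nth_ins //; try lia.
  have : nth 0 v i < n by apply: (isperm_nth Hv); lia.
  have : nth 0 v i.+1 < n by apply: (isperm_nth Hv); lia.
  rewrite /inc; do 2 case: ifPn; lia.
Qed.

Definition pl n (pi : 'S_n) : seq nat := [seq val (pi i) | i <- enum 'I_n].

Lemma size_pl n (pi : 'S_n) : size (pl pi) = n.
Proof. by rewrite size_map size_enum_ord. Qed.

Lemma nth_pl n (pi : 'S_n) (i : 'I_n) : nth 0 (pl pi) i = pi i.
Proof.
by rewrite /pl (nth_map i) ?size_enum_ord // nth_ord_enum.
Qed.

Lemma pl_isperm n (pi : 'S_n) : isperm n (pl pi).
Proof.
apply/and3P; split.
- rewrite map_inj_uniq ?enum_uniq // => i j /val_inj; exact: perm_inj.
- by rewrite size_pl.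
- apply/allP => x /mapP[i _ ->]; exact: ltn_ord.
Qed.

Lemma pl_inj n : injective (@pl n).
Proof.
move=> p1 p2 E; apply/permP => i; apply: val_inj.
by have := nth_pl p1 i; rewrite E nth_pl => H; exact: esym H.
Qed.

Lemma pl_surj n t : isperm n t -> exists pi : 'S_n, pl pi = t.
Proof.
move=> Ht.
have Hv : forall i : 'I_n, val (insubd i (nth 0 t i) : 'I_n) = nth 0 t i.
  by move=> i; rewrite val_insubd (isperm_nth Ht (ltn_ord i)).
have Hinj : injective (fun i : 'I_n => insubd i (nth 0 t i) : 'I_n).
  move=> i j /(congr1 val); rewrite !Hv => /eqP; rewrite nth_uniq.
  - by move/eqP/val_inj.
  - by case/and3P: Ht => _ /eqP ->.
  - by case/and3P: Ht => _ /eqP ->.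
  - by case/and3P: Ht.
exists (perm Hinj).
have Hsz : size t = n by case/and3P: Ht => _ /eqP ->.
apply: (@eq_from_nth _ 0); first by rewrite size_pl Hsz.
move=> k; rewrite size_pl => Hk.
by rewrite -[k]/(nat_of_ord (Ordinal Hk)) nth_pl permE Hv.
Qed.

Lemma card_bridge n (P : pred (seq nat)) :
  #|[set pi : 'S_n | P (pl pi)]| = count P (perms n).
Proof.
rewrite cardE -(size_map (@pl n)) -size_filter; apply: perm_size.
apply: uniq_perm.
- rewrite map_inj_uniq ?enum_uniq //; exact: pl_inj.
- exact/filter_uniq/permutations_uniq.
move=> t; apply/idP/idP.
  case/mapP=> pi; rewrite mem_enum inE => HP ->.
  by rewrite mem_filter HP mem_perms pl_isperm.
rewrite mem_filter mem_perms => /andP[HP Ht].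
have [pi Hpi] := pl_surj Ht.
by apply/mapP; exists pi => //; rewrite mem_enum inE Hpi.
Qed.

Lemma fix_char n (s : 'S_n) : [exists i : 'I_n, s i == i] = ~~ nfp n (pl s).
Proof.
apply/existsP/idP.
  case=> i /eqP Hi; apply/negP => /allP /(_ i).
  by rewrite mem_iota /= ltn_ord nth_pl Hi eqxx => /(_ isT).
move/allPn => [i]; rewrite mem_iota /= => Hi; rewrite negbK => /eqP E.
have Hi2 : i < n by rewrite add0n in Hi.
exists (Ordinal Hi2); apply/eqP/val_inj => /=.
have := nth_pl s (Ordinal Hi2); rewrite /= E => H; exact: esym H.
Qed.

Lemma nonder_count m : nonderangements m + Ecount m m = m`!.
Proof.
rewrite /nonderangements (eq_card (B := [set s : 'S_m | ~~ nfp m (pl s)])); last first.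
  by move=> s; rewrite !inE fix_char.
rewrite (card_bridge m (fun t => ~~ nfp m t)) /Ecount addnC.
have := count_predC (nfp m) (perms m); rewrite size_perms => <-.
by congr (_ + _); apply: eq_count.
Qed.

Lemma enum3 : enum 'I_3 = [:: Ordinal (isT : 0 < 3); Ordinal (isT : 1 < 3); Ordinal (isT : 2 < 3)].
Proof. by apply: (inj_map val_inj); rewrite val_enum_ord. Qed.

Lemma contains_to n (pi : 'S_n) :
  contains_bv sigma123 X1 Y13 pi -> ~~ avoidL (pl pi).
Proof.
case/existsP => idx; rewrite /occurrence enum3 /= => /and4P[HA HB HC HD].
set o0 := Ordinal (isT : 0 < 3); set o1 := Ordinal (isT : 1 < 3); set o2 := Ordinal (isT : 2 < 3).
have A01 : idx o0 < idx o1 by move/forallP/(_ o0)/forallP/(_ o1)/implyP/(_ isT): HA.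
have A12 : idx o1 < idx o2 by move/forallP/(_ o1)/forallP/(_ o2)/implyP/(_ isT): HA.
have B01 : pi (idx o0) < pi (idx o1).
  by move/forallP/(_ o0)/forallP/(_ o1)/eqP: HB; rewrite /sigma123 !perm1 => ->.
have B12 : pi (idx o1) < pi (idx o2).
  by move/forallP/(_ o1)/forallP/(_ o2)/eqP: HB; rewrite /sigma123 !perm1 => ->.
have C1 : (idx o1).+1 == (idx o0).+2.
  by move/forallP/(_ (inord 1))/implyP: HC; rewrite /X1 inE eqxx inordK //= => /(_ isT).
have Hsort : sort leq [:: (pi (idx o0)).+1; (pi (idx o1)).+1; (pi (idx o2)).+1] =
             [:: (pi (idx o0)).+1; (pi (idx o1)).+1; (pi (idx o2)).+1].
  by apply: (sorted_sort leq_trans); rewrite /= andbT; apply/andP; split; apply: ltnW.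
rewrite Hsort in HD.
have D1 : (pi (idx o1)).+1 == (pi (idx o0)).+2.
  by move/forallP/(_ (inord 1))/implyP: HD; rewrite /Y13 !inE eqxx inordK //= => /(_ isT).
have D3 : n.+1 == (pi (idx o2)).+2.
  move/forallP/(_ (inord 3))/implyP: HD; rewrite /Y13 !inE eqxx orbT inordK //=.
  by move=> /(_ isT).
have Hq : index n.-1 (pl pi) = idx o2.
  have -> : n.-1 = nth 0 (pl pi) (idx o2) by rewrite nth_pl; lia.
  by rewrite index_uniq // ?size_pl //; case/and3P: (pl_isperm pi).
rewrite /avoidL size_pl Hq; apply/allPn; exists (nat_of_ord (idx o0)).
  rewrite mem_iota add0n; lia.
have -> : (nat_of_ord (idx o0)).+1 = nat_of_ord (idx o1) by lia.
rewrite !nth_pl negbK; lia.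
Qed.

Lemma contains_from n (pi : 'S_n) :
  ~~ avoidL (pl pi) -> contains_bv sigma123 X1 Y13 pi.
Proof.
have Ht := pl_isperm pi.
rewrite /avoidL size_pl => /allPn[i]; rewrite mem_iota add0n => Hi.
rewrite negbK => /eqP Hs.
move: Hi; set q := index n.-1 (pl pi) => Hi.
have Hqn : q <= n by rewrite -(size_pl pi) index_size.
have Hmem : n.-1 \in pl pi by apply: (isperm_mem Ht); lia.
have Hq : q < n by rewrite -(size_pl pi) index_mem.
have H0 : i < n by lia.
have H1 : i.+1 < n by lia.
set L := [:: Ordinal H0; Ordinal H1; Ordinal Hq].
set idx : {ffun 'I_3 -> 'I_n} := [ffun a : 'I_3 => nth (Ordinal H0) L a].
have HI : forall a : 'I_3, nat_of_ord (idx a) = nth 0 [:: i; i.+1; q] a.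
  move=> a; rewrite ffunE -[RHS]/(nth 0 [seq nat_of_ord x | x <- L] a).
  by rewrite (nth_map (Ordinal H0)) // (ltn_ord a).
have V0 : nat_of_ord (pi (Ordinal H0)) = nth 0 (pl pi) i by rewrite -(nth_pl pi (Ordinal H0)).
have V1 : nat_of_ord (pi (Ordinal H1)) = (nth 0 (pl pi) i).+1.
  by rewrite -Hs -(nth_pl pi (Ordinal H1)).
have V2 : nat_of_ord (pi (Ordinal Hq)) = n.-1.
  by rewrite -(nth_pl pi (Ordinal Hq)) /= nth_index.
have Hg : forall a : 'I_3, nat_of_ord (pi (idx a)) = nth 0 [:: nth 0 (pl pi) i; (nth 0 (pl pi) i).+1; n.-1] a.
  have Em : [seq nat_of_ord (pi x) | x <- L] = [:: nth 0 (pl pi) i; (nth 0 (pl pi) i).+1; n.-1].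
    by rewrite -V1 -V0 -V2.
  by move=> a; rewrite ffunE -Em (nth_map (Ordinal H0)) // (ltn_ord a).
have Hlt1 : (nth 0 (pl pi) i).+1 < n.-1.
  have : nth 0 (pl pi) i.+1 < n by apply: (isperm_nth Ht).
  have : nth 0 (pl pi) i.+1 != nth 0 (pl pi) q by apply: (isperm_neq Ht) => //; lia.
  rewrite nth_index //; lia.
apply/existsP; exists idx; rewrite /occurrence enum3.
apply/and4P; split.
- apply/forallP => a; apply/forallP => b; apply/implyP.
  rewrite !HI; case: a => [[|[|[|a]]] Ha]; case: b => [[|[|[|b]]] Hb] //=; lia.
- apply/forallP => a; apply/forallP => b.
  rewrite /sigma123 !perm1 !Hg; case: a => [[|[|[|a]]] Ha]; case: b => [[|[|[|b]]] Hb] //=; lia.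
- apply/forallP => x; apply/implyP; rewrite /X1 inE => /eqP ->.
  rewrite (_ : val (inord 1 : 'I_4) = 1); last exact: inordK.
  rewrite /= !HI /=; lia.
- rewrite (_ : [seq (pi (idx a)).+1 | a <- _] = [:: (pi (idx (Ordinal (isT : 0 < 3)))).+1;
     (pi (idx (Ordinal (isT : 1 < 3)))).+1; (pi (idx (Ordinal (isT : 2 < 3)))).+1]) //.
  rewrite !Hg /=.
  rewrite (sorted_sort leq_trans); last by rewrite /=; lia.
  apply/forallP => y; apply/implyP; rewrite /Y13 !inE => /orP[] /eqP ->; [rewrite (_ : val (inord 1 : 'I_4) = 1); last exact: inordK | rewrite (_ : val (inord 3 : 'I_4) = 3); last exact: inordK]; rewrite /=; lia.
Qed.

Lemma contains_char n (pi : 'S_n) :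
  contains_bv sigma123 X1 Y13 pi = ~~ avoidL (pl pi).
Proof. by apply/idP/idP; [apply: contains_to | apply: contains_from]. Qed.

Lemma a_seq_count n : a_seq n = count avoidL (perms n).
Proof.
rewrite /a_seq /avoid_count -(card_bridge n avoidL).
by apply: eq_card => pi; rewrite !inE contains_char negbK.
Qed.

Import GRing.Theory.

Lemma FE m p : p < m -> Fcount m p.+1 = Ecount m p.
Proof.
elim: m p => [|m IHm] p //.
elim: p => [|p IHp] Hp; first by rewrite F1 E0.
have H1 := Frec (m := m) (p := p.+1) isT (Hp : p.+1 <= m).
have H2 := Erec (m := m) (p := p) (ltnW Hp).
have H3 := IHp (ltnW Hp).
have H4 := IHm p Hp.
lia.
Qed.

Lemma a_succ n : a_seq n.+1 = n`! + \sum_(p < n) Ecount n p.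
Proof.
rewrite a_seq_count avoid_count_sum big_ord_recl F0; congr (_ + _).
by apply: eq_bigr => i _; rewrite lift0 FE.
Qed.

Lemma tele m q : q <= m.+1 -> \sum_(p < q) Ecount m p + Ecount m.+1 q = m.+1`!.
Proof.
elim: q => [|q IH] Hq; first by rewrite big_ord0 E0.
have -> : \sum_(i < q.+1) Ecount m i = \sum_(i < q) Ecount m i + Ecount m q.
  by rewrite big_ord_recr.
have H1 := Erec (m := m) (p := q) Hq.
have H2 := IH (ltnW Hq).
lia.
Qed.

Local Open Scope ring_scope.

Definition Tm (m p j : nat) : int := (-1) ^+ j * ('C(p, j) * (m - j)`!)%:Z.

Lemma Ecl p m : (p <= m)%N -> (Ecount m p)%:Z = \sum_(0 <= j < p.+1) Tm m p j.
Proof.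
elim: p m => [|p IHp] m Hm.
  by rewrite E0 big_nat1 /Tm expr0 mul1r bin0 mul1n subn0.
case: m Hm => [|m] // Hm.
have Hm' : (p <= m)%N by [].
have -> : (Ecount m.+1 p.+1)%:Z = (Ecount m.+1 p)%:Z - (Ecount m p)%:Z.
  by rewrite (Erec Hm') PoszD addrK.
rewrite (IHp m.+1) //. rewrite [(Ecount m p)%:Z]IHp //.
rewrite [RHS]big_nat_recl // [X in X - _ = _]big_nat_recl //.
have -> : \sum_(0 <= i < p.+1) Tm m.+1 p.+1 i.+1 =
          \sum_(0 <= i < p.+1) (-1) ^+ i.+1 * ('C(p, i.+1) * (m - i)`!)%:Z
        - \sum_(0 <= i < p.+1) Tm m p i.
  rewrite -sumrB; apply: eq_bigr => i _.
  rewrite /Tm binS subSS mulnDl PoszD mulrDr exprS mulN1r; congr (_ + _).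
  by rewrite mulNr.
have -> : Tm m.+1 p 0 = Tm m.+1 p.+1 0 by rewrite /Tm !bin0.
rewrite -addrA; congr (_ + (_ - _)).
rewrite big_nat_recr //= bin_small // mul0n mulr0 addr0.
by apply: eq_bigr => i _; rewrite /Tm subSS.
by apply: leqW.
Qed.

Lemma Gfact m j : (j <= m)%N -> ('C(m.+1, j) * (m.+1 - j)`! = m.+1 * ('C(m, j) * (m - j)`!))%N.
Proof.
move=> Hj; apply/eqP; rewrite -(eqn_pmul2r (fact_gt0 j)).
rewrite -mulnA [((m.+1 - j)`! * _)%N]mulnC bin_fact; last by apply: leqW.
rewrite -!mulnA [((m - j)`! * _)%N]mulnC bin_fact // factS.
Qed.

Lemma Drec m : (Ecount m.+1 m.+1)%:Z = (m.+1)%:Z * (Ecount m m)%:Z + (-1) ^+ m.+1.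
Proof.
rewrite !Ecl // big_nat_recr //= /Tm binn subnn mul1n fact0 mulr1.
congr (_ + _); rewrite big_distrr /=.
apply: eq_big_nat => i /andP[_ Hi].
rewrite Gfact; last by rewrite -ltnS.
by rewrite PoszM mulrCA.
Qed.

Import GRing.Theory.

Lemma a_cc m : a_seq m.+1 = (nonderangements m.+1 + nonderangements m)%N.
Proof.
have H1 := a_succ m.
have H2 := tele (leqnSn m).
have H3 := Erec (leqnn m).
have H4 := nonder_count m.
have H5 := nonder_count m.+1.
lia.
Qed.

Local Open Scope ring_scope.

Lemma Hc k : (nonderangements k)%:Z = (k`!)%:Z - (Ecount k k)%:Z.
Proof. by rewrite -(nonder_count k) PoszD addrK. Qed.

Lemma Drec_nat m : Ecount m.+2 m.+2 = (m.+1 * (Ecount m.+1 m.+1 + Ecount m m))%N.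
Proof.
suff : (Ecount m.+2 m.+2)%:Z = (m.+1 * (Ecount m.+1 m.+1 + Ecount m m))%N%:Z by case.
rewrite Drec (Drec m) exprS PoszM PoszD (Drec m); rewrite !exprS; ring.
Qed.

Lemma na m : (m.+1 * a_seq m.+1)%N = nonderangements m.+2.
Proof.
suff : (m.+1 * a_seq m.+1)%N%:Z = (nonderangements m.+2)%:Z by case.
rewrite PoszM a_cc PoszD !Hc Drec_nat (factS m.+1) (factS m) !PoszM ?PoszD ?PoszM.
ring.
Qed.

Lemma closed_form m : (a_seq m.+1)%:Z = ((m.+1 - 1)`!)%:Z +
             \sum_(0 <= k < m.+1.-1) (-1) ^+ (m.+1 - k) * ((k.+1)`! * 'C(m.+1 - 1, k))%:Z.
Proof.
rewrite (_ : (m.+1 - 1)%N = m); last by rewrite subn1.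
rewrite -[m.+1.-1]/m a_succ PoszD; congr (_ + _).
have H1 := tele (leqnSn m).
have H2 := Ecl (leqnSn m).
have -> : (\sum_(p < m) Ecount m p)%:Z = (m.+1`!)%:Z - (Ecount m.+1 m)%:Z.
  by rewrite -H1 PoszD addrK.
rewrite H2 big_nat_recl // /Tm expr0 mul1r bin0 mul1n subn0 opprD addrA subrr add0r.
rewrite big_nat_rev -sumrN; apply: eq_big_nat => i /andP[_ Hi].
rewrite add0n (_ : ((m - i.+1).+1 = m - i)%N); last lia.
rewrite bin_sub; last lia.
rewrite (_ : (m.+1 - (m - i) = i.+1)%N); last lia.
rewrite (_ : (m.+1 - i = (m - i).+1)%N); last lia.
by rewrite exprS mulN1r mulNr mulnC.
Qed.

Theorem mainTheorem13 :
  [/\ a_seq 1 = 1%N, a_seq 2 = 2%N,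
      (forall n : nat, (2 < n)%N ->
         a_seq n = ((n - 1) * a_seq (n - 1) + (n - 2) * a_seq (n - 2))%N)
    & forall n : nat, (1 <= n)%N ->
      [/\ (a_seq n)%:Z = ((n - 1)`!)%:Z +
             \sum_(0 <= k < n.-1) (-1) ^+ (n - k) * ((k.+1)`! * 'C(n - 1, k))%:Z,
          (n * a_seq n)%N = nonderangements n.+1
        & a_seq n = (nonderangements n + nonderangements (n - 1))%N]].
Proof.
split.
- by rewrite a_succ big_ord0.
- by rewrite a_succ big_ord1 E0.
- case=> [|[|[|m]]] // _.
  rewrite (_ : (m.+3 - 1 = m.+2)%N); last lia.
  rewrite (_ : (m.+3 - 2 = m.+1)%N); last lia.
  rewrite a_cc na -(na m); lia.
- case=> [|m] // _; split.
  + exact: closed_form.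
  + exact: na.
  + by rewrite a_cc subn1.
Qed.
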